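(* Let $X$ be a collectionwise normal homogeneous space with $\operatorname{ind} X=0$ which has property $\mathcal D$. Then $X$ is strongly discrete homogeneous.
   Context: $X$ is homogeneous if for any $x,y\in X$ there is a homeomorphism $f\colon X\to X$ with $f(x)=y$. A space $X$ is collectionwise normal if it is $T_1$ and for every discrete family $\{F_s\}_{s\in S}$ of closed subsets there is a discrete family $\{V_s\}_{s\in S}$ of open sets with $F_s\subseteq V_s$. $\operatorname{ind}$ is the small inductive dimension. A Hausdorff space $X$ has property $\mathcal D$ if for any proper clopen subsets $F,G$ of $X$ that are homeomorphic, the subspaces $X\setminus F$ and $X\setminus G$ are also homeomorphic. A subset $D$ of $X$ is discrete if each point of $X$ has a neighbourhood containing at most one point of $D$. A Hausdorff space $X$ is strongly discrete homogeneous (sDH) if for any two discrete subsets $A,B$ and any bijection $f\colon A\to B$, $f$ extends to a homeomorphism of $X$ onto itself. *)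

(* Defs.v *)
From HB Require Import structures.
From mathcomp Require Import all_boot all_order.
From mathcomp Require Import all_classical topology.
Set Implicit Arguments. Unset Strict Implicit. Unset Printing Implicit Defensive.
Local Open Scope classical_set_scope.

Section Defs.
Variable X : topologicalType.

Definition self_homeo (h : X -> X) : Prop :=
  exists g : X -> X, cancel h g /\ cancel g h /\ continuous h /\ continuous g.

Definition homogeneous : Prop :=
  forall x y : X, exists h : X -> X, self_homeo h /\ h x = y.

Definition homeomorphic_subspaces (A B : set X) : Prop :=
  exists f g : X -> X,
    set_fun A B f /\ set_fun B A g /\
    (forall x, A x -> g (f x) = x) /\ (forall y, B y -> f (g y) = y) /\
    {within A, continuous f} /\ {within B, continuous g}.

Definition T1_space : Prop :=
  forall x y : X, x <> y -> exists U, nbhs x U /\ ~ U y.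

Definition discrete_family (S : Type) (F : S -> set X) : Prop :=
  forall x : X, exists U, nbhs x U /\
    forall s t, U `&` F s !=set0 -> U `&` F t !=set0 -> s = t.

Definition collectionwise_normal : Prop :=
  T1_space /\
  forall (S : Type) (F : S -> set X),
    (forall s, closed (F s)) -> discrete_family F ->
    exists V : S -> set X,
      (forall s, open (V s)) /\ discrete_family V /\ (forall s, F s `<=` V s).

(* ind X = 0: X is nonempty and every point has arbitrarily small open
   neighbourhoods with empty boundary, i.e. clopen neighbourhoods
   (ind of the empty space being -1) *)
Definition ind_eq0 : Prop :=
  [set: X] !=set0 /\
  forall (x : X) (V : set X), open V -> V x ->
    exists U : set X, open U /\ U x /\ U `<=` V /\ closure U `\` U = set0.

Definition clopen_set (A : set X) : Prop := open A /\ closed A.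

Definition property_D : Prop :=
  hausdorff_space X /\
  forall F G : set X, clopen_set F -> clopen_set G ->
    F <> setT -> G <> setT ->
    homeomorphic_subspaces F G -> homeomorphic_subspaces (~` F) (~` G).

Definition discrete_subset (D : set X) : Prop :=
  forall x : X, exists U, nbhs x U /\
    forall a b, D a -> D b -> U a -> U b -> a = b.

Definition sDH : Prop :=
  hausdorff_space X /\
  forall (A B : set X) (f : X -> X),
    discrete_subset A -> discrete_subset B -> set_bij A B f ->
    exists h : X -> X, self_homeo h /\ (forall a, A a -> h a = f a).
End Defs.

(* Main.v *)
Require Import Defs.
From mathcomp Require Import all_boot all_classical topology.
Set Implicit Arguments. Unset Strict Implicit. Unset Printing Implicit Defensive.
Local Open Scope classical_set_scope.

Section Helpers.
Variable X : topologicalType.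

Lemma cont_loc (Y : topologicalType) (f h : X -> Y) (N : set X) x :
  nbhs x N -> (forall y, N y -> f y = h y) -> {for x, continuous h} ->
  {for x, continuous f}.
Proof.
move=> Nx eq hc V /=; rewrite (eq x (nbhs_singleton Nx)) => /hc hV.
apply: filterS (filterI Nx hV) => y [Ny hy]; rewrite /= eq //.
Qed.

Lemma open_nbhs' (U : set X) x : open U -> U x -> nbhs x U.
Proof. by move=> oU Ux; apply: open_nbhs_nbhs. Qed.

Lemma closed_of_ind (U : set X) : closure U `\` U = set0 -> closed U.
Proof.
move=> E y cy; apply: contrapT => nU.
have : (closure U `\` U) y by [].
by rewrite E.
Qed.

Lemma disc_closed (D : set X) : hausdorff_space X -> discrete_subset D -> closed D.
Proof.
move=> hX dD; rewrite -openC openE => x nDx.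
have [U [Ux Uu]] := dD x.
have [[b [Db Ub]]|nb] := pselect (exists b, D b /\ U b).
  have bx : b <> x by move=> bx; apply: nDx; rewrite -bx.
  have cb : closed [set b] by apply: accessible_closed_set1; apply: hausdorff_accessible.
  have Nx : nbhs x (~` [set b]) by apply: open_nbhs'; [rewrite openC | move=> /esym].
  apply: filterS (filterI Ux Nx) => y [Uy nby] Dy; apply: nby.
  exact: (Uu y b).
apply: filterS Ux => y Uy Dy; apply: nb; by exists y.
Qed.

Lemma disc_nbhs (D : set X) : closed D -> discrete_subset D ->
  forall x, exists N, nbhs x N /\ forall y, N y -> D y -> y = x.
Proof.
move=> cD dD x; have [Dx|nDx] := pselect (D x).
  have [U [Ux Uu]] := dD x; exists U; split => // y Uy Dy.
  exact: (Uu y x Dy Dx Uy (nbhs_singleton Ux)).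
exists (~` D); split; first by apply: open_nbhs'; rewrite // openC.
by move=> y.
Qed.

Lemma disc_fam_disj (S : Type) (V : S -> set X) : discrete_family V ->
  forall s t y, V s y -> V t y -> s = t.
Proof.
move=> dV s t y Vs Vt; have [U [Uy Uu]] := dV y.
by apply: Uu; exists y; split => //; apply: nbhs_singleton.
Qed.

Lemma union_clopen (S : Type) (P : S -> Prop) (E : S -> set X) :
 (forall i, P i -> open (E i) /\ closed (E i)) ->
 (forall y : X, exists N, nbhs y N /\ forall i j, P i -> P j ->
     (N `&` E i !=set0) -> (N `&` E j !=set0) -> i = j) ->
 open [set y | exists i, P i /\ E i y] /\ closed [set y | exists i, P i /\ E i y].
Proof.
move=> cE dE; split.
  rewrite openE => y [i [Pi Eiy]].
  apply: filterS (open_nbhs' (cE i Pi).1 Eiy) => z Ez; by exists i.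
rewrite -openC openE => y nWy.
have [N [Ny Nu]] := dE y.
have [[i [Pi [z [Nz Ez]]]]|nb] := pselect (exists i, P i /\ (N `&` E i !=set0)).
  have Ny' : nbhs y (~` E i).
    apply: open_nbhs'; first by rewrite openC; exact: (cE i Pi).2.
    by move=> Eiy; apply: nWy; exists i.
  apply: filterS (filterI Ny Ny') => w [Nw nEw] [j [Pj Ejw]].
  have ji : j = i by apply: (Nu j i Pj Pi); [exists w | exists z].
  by apply: nEw; rewrite -ji.
apply: filterS Ny => w Nw [j [Pj Ejw]]; apply: nb; exists j; split => //.
by exists w.
Qed.

Lemma disc_sep (D : set X) : hausdorff_space X -> collectionwise_normal X ->
  discrete_subset D ->
  exists V : X -> set X, (forall x, open (V x)) /\ (forall x, D x -> V x x) /\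
    discrete_family V.
Proof.
move=> hX [_ cwn] dD.
pose F x := [set y | D y /\ y = x].
have cF : forall x, closed (F x).
  move=> x; have [Dx|nDx] := pselect (D x).
    have -> : F x = [set x].
      by apply/seteqP; split => y; [case | move=> ->; split].
    exact: accessible_closed_set1 (hausdorff_accessible hX) x.
  have -> : F x = set0.
    by apply/seteqP; split => y //; case=> Dy yx; apply: nDx; rewrite -yx.
  exact: closed0.
have dF : discrete_family F.
  move=> z; have [U [Uz Uu]] := dD z; exists U; split => //.
  move=> s t [a [Ua [Da es]]] [b [Ub [Db et]]].
  by rewrite -es -et; apply: Uu.
have [V [oV [dV FV]]] := cwn X F cF dF.
exists V; split => //; split => // x Dx; exact: (FV x x (conj Dx erefl)).
Qed.


Definition hdata (W W' : set X) (phi psi : X -> X) :=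
  [/\ set_fun W W' phi, set_fun W' W psi, (forall x, W x -> psi (phi x) = x),
      (forall y, W' y -> phi (psi y) = y) &
      ((forall x, W x -> {for x, continuous phi}) /\
       (forall y, W' y -> {for y, continuous psi}))].

Lemma construct (A B : set X) (f : X -> X) (O : set X) :
  hausdorff_space X -> collectionwise_normal X -> homogeneous X -> ind_eq0 X ->
  discrete_subset A -> discrete_subset B -> set_fun A B f -> set_inj A f ->
  open O -> A `<=` O -> B `<=` O ->
  exists W W' phi psi, [/\ open W /\ closed W, open W' /\ closed W',
    W `<=` O /\ W' `<=` O, hdata W W' phi psi & forall a, A a -> W a /\ phi a = f a].
Proof.
move=> hX cwn hom ind dA dB fAB injf oO AO BO.
have [V [oV [VA dV]]] := disc_sep hX cwn dA.
have [V' [oV' [VB dV']]] := disc_sep hX cwn dB.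
have /choice [hg Hhg] : forall x, exists p : (X -> X) * (X -> X),
  [/\ cancel p.1 p.2, cancel p.2 p.1, continuous p.1, continuous p.2 & p.1 x = f x].
  move=> x; have [h [[g [c1 [c2 [ch cg]]]] hx]] := hom x (f x).
  by exists (h, g).
pose h x := (hg x).1; pose g x := (hg x).2.
have hgK x : cancel (h x) (g x) by case: (Hhg x).
have ghK x : cancel (g x) (h x) by case: (Hhg x).
have hc x : continuous (h x) by case: (Hhg x).
have gc x : continuous (g x) by case: (Hhg x).
have hx x : h x x = f x by case: (Hhg x).
pose N x := V x `&` O `&` (h x) @^-1` (V' (f x) `&` O).
have /choice [U HU] : forall x, exists U : set X,
   A x -> [/\ open U, closed U, U x & U `<=` N x].
  move=> x; have [Ax|nAx] := pselect (A x); last by exists set0.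
  have oN : open (N x).
    apply: openI; first exact: openI.
    by apply: (continuousP _).1 => //; apply: openI.
  have Nx : N x x.
    split; first by split; [apply: VA | apply: AO].
    rewrite /= hx; split; [apply: VB | apply: BO]; exact: fAB.
  have [U' [oU [U'x [U'N cl]]]] := ind.2 x (N x) oN Nx.
  by exists U'; split => //; apply: closed_of_ind.
pose W := [set y | exists i, A i /\ U i y].
pose E' i := (g i) @^-1` (U i).
pose W' := [set y | exists i, A i /\ E' i y].
have UV i y : A i -> U i y -> V i y /\ O y.
  by move=> Ai Uiy; have [_ _ _ /(_ y Uiy) [[]]] := HU i Ai.
have E'V i y : A i -> E' i y -> V' (f i) y /\ O y.
  move=> Ai Eiy; have [_ _ _ /(_ _ Eiy) [_ /=]] := HU i Ai.
  by rewrite ghK.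
have u1 i j y : A i -> A j -> U i y -> U j y -> i = j.
  move=> Ai Aj Ui Uj; apply: (disc_fam_disj dV (y := y)).
    exact: (UV i y Ai Ui).1.
  exact: (UV j y Aj Uj).1.
have u2 i j y : A i -> A j -> E' i y -> E' j y -> i = j.
  move=> Ai Aj Ei Ej; apply: injf; rewrite ?inE //.
  apply: (disc_fam_disj dV' (y := y)).
    exact: (E'V i y Ai Ei).1.
  exact: (E'V j y Aj Ej).1.
have cW : open W /\ closed W.
  apply: union_clopen; first by move=> i Ai; have [] := HU i Ai.
  move=> y; have [M [My Mu]] := dV y; exists M; split => // i j Ai Aj.
  move=> [z [Mz Uz]] [w [Mw Uw]]; apply: Mu.
    by exists z; split => //; exact: (UV i z Ai Uz).1.
  by exists w; split => //; exact: (UV j w Aj Uw).1.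
have cW' : open W' /\ closed W'.
  apply: union_clopen.
    move=> i Ai; have [oU cU _ _] := HU i Ai; split.
      exact: (continuousP _).1 (gc i) _ oU.
    rewrite -openC.
    by have := (continuousP _).1 (gc i) (~` U i); apply; rewrite openC.
  move=> y; have [M [My Mu]] := dV' y; exists M; split => // i j Ai Aj.
  move=> [z [Mz Uz]] [w [Mw Uw]]; apply: injf; rewrite ?inE //; apply: Mu.
    by exists z; split => //; exact: (E'V i z Ai Uz).1.
  by exists w; split => //; exact: (E'V j w Aj Uw).1.
have /choice [idx Hidx] : forall y, exists i, W y -> A i /\ U i y.
  move=> y; have [[i Hi]|nW] := pselect (W y); first by exists i.
  by exists y.
have /choice [idx' Hidx'] : forall y, exists i, W' y -> A i /\ E' i y.
  move=> y; have [[i Hi]|nW] := pselect (W' y); first by exists i.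
  by exists y.
have idxE i y : A i -> U i y -> idx y = i.
  move=> Ai Uiy; have [] := Hidx y; first by exists i.
  by move=> Aj Uj; apply: (u1 _ _ y).
have idx'E i y : A i -> E' i y -> idx' y = i.
  move=> Ai Eiy; have [] := Hidx' y; first by exists i.
  by move=> Aj Ej; apply: (u2 _ _ y).
pose phi y := h (idx y) y.
pose psi y := g (idx' y) y.
exists W, W', phi, psi; split => //.
- split.
    by move=> y [i [Ai Uiy]]; exact: (UV i y Ai Uiy).2.
  by move=> y [i [Ai Eiy]]; exact: (E'V i y Ai Eiy).2.
- split.
  + move=> y [i [Ai Uiy]]; exists i; split => //.
    by rewrite /E' /= /phi (idxE i y Ai Uiy) hgK.
  + move=> y [i [Ai Eiy]]; exists i; split => //.
    by rewrite /psi (idx'E i y Ai Eiy).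
  + move=> y [i [Ai Uiy]]; rewrite /phi (idxE i y Ai Uiy) /psi.
    have Ei : E' i (h i y) by rewrite /E' /= hgK.
    by rewrite (idx'E i _ Ai Ei) hgK.
  + move=> y [i [Ai Eiy]]; rewrite /psi (idx'E i y Ai Eiy) /phi.
    by rewrite (idxE i _ Ai Eiy) ghK.
  + split.
      move=> y [i [Ai Uiy]]; apply: (cont_loc (h := h i) (N := U i)).
      * by apply: open_nbhs'; [have [] := HU i Ai | ].
      * by move=> z Uz; rewrite /phi (idxE i z Ai Uz).
      * exact: hc.
    move=> y [i [Ai Eiy]]; apply: (cont_loc (h := g i) (N := E' i)).
    * apply: open_nbhs' => //.
      by have := (continuousP _).1 (gc i) (U i); apply; have [] := HU i Ai.
    * by move=> z Ez; rewrite /psi (idx'E i z Ai Ez).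
    * exact: gc.
- move=> a Aa; have Ua : U a a by have [] := HU a Aa.
  by split; [exists a | rewrite /phi (idxE a a Aa Ua) hx].
Qed.


Lemma hdata_sym W W' phi psi : hdata W W' phi psi -> hdata W' W psi phi.
Proof. by move=> [a b c d [e k]]; split. Qed.

Lemma glue W W' phi psi : property_D X -> open W -> closed W -> open W' ->
  closed W' -> W <> setT -> W' <> setT -> hdata W W' phi psi ->
  exists h, self_homeo h /\ forall x, W x -> h x = phi x.
Proof.
move=> [hX D] oW cW oW' cW' nW nW' [fW fW' K1 K2 [c1 c2]].
have hs : homeomorphic_subspaces W W'.
  exists phi, psi; do 4 (split; first by []); split.
    by rewrite continuous_open_subspace // => x /set_mem Wx; apply: c1.
  by rewrite continuous_open_subspace // => x /set_mem Wx; apply: c2.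
have [p [q [fp [fq [Kp [Kq [cp cq]]]]]]] := D W W' (conj oW cW) (conj oW' cW') nW nW' hs.
rewrite continuous_open_subspace in cp; last by rewrite openC.
rewrite continuous_open_subspace in cq; last by rewrite openC.
pose H x := if pselect (W x) is left _ then phi x else p x.
pose G y := if pselect (W' y) is left _ then psi y else q y.
exists H; split; last by move=> x Wx; rewrite /H; case: pselect.
exists G; split; [|split; [|split]].
- move=> x; rewrite /H; case: pselect => Wx; rewrite /G; case: pselect => W'y.
  + exact: K1.
  + by exfalso; apply: W'y; apply: fW.
  + by exfalso; apply: (fp x Wx).
  + exact: Kp.
- move=> y; rewrite /G; case: pselect => W'y; rewrite /H; case: pselect => Wx.
  + exact: K2.
  + by exfalso; apply: Wx; apply: fW'.
  + by exfalso; apply: (fq y W'y).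
  + exact: Kq.
- move=> x; have [Wx|nWx] := pselect (W x).
    apply: (cont_loc (h := phi) (N := W)); first exact: open_nbhs'.
      by move=> y Wy; rewrite /H; case: pselect.
    exact: c1.
  apply: (cont_loc (h := p) (N := ~` W)).
  + by apply: open_nbhs' => //; rewrite openC.
  + by move=> y Wy; rewrite /H; case: pselect.
  + by apply: cp; apply: mem_set.
- move=> x; have [Wx|nWx] := pselect (W' x).
    apply: (cont_loc (h := psi) (N := W')); first exact: open_nbhs'.
      by move=> y Wy; rewrite /G; case: pselect.
    exact: c2.
  apply: (cont_loc (h := q) (N := ~` W')).
  + by apply: open_nbhs' => //; rewrite openC.
  + by move=> y Wy; rewrite /G; case: pselect.
  + by apply: cq; apply: mem_set.
Qed.

Lemma full phi psi : hdata setT setT phi psi -> self_homeo phi.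
Proof.
move=> [_ _ K1 K2 [c1 c2]]; exists psi; split; [|split; [|split]].
- by move=> x; apply: K1.
- by move=> x; apply: K2.
- by move=> x; apply: c1.
- by move=> x; apply: c2.
Qed.

Lemma disc_open : (forall x : X, nbhs x [set x]) -> forall U : set X, open U.
Proof.
by move=> Hs U; rewrite openE => x Ux; apply: filterS (Hs x) => y ->.
Qed.

Lemma disc_cont : (forall x : X, nbhs x [set x]) -> forall f : X -> X, continuous f.
Proof.
move=> Hs f x V /= HV; apply: filterS (Hs x) => y -> /=.
exact: nbhs_singleton HV.
Qed.

Lemma mixed W' phi psi : (forall x : X, nbhs x [set x]) -> property_D X ->
  hdata setT W' phi psi -> W' <> setT -> False.
Proof.
move=> Hs [hX D] [fW fW' K1 K2 _] nW'.
have [y0 ny0] : exists y, ~ W' y.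
  apply: contrapT => H; apply: nW'; apply/seteqP; split => y // _.
  by apply: contrapT => ny; apply: H; exists y.
pose a0 := y0.
pose F := ~` [set a0].
pose G := W' `&` ~` [set phi a0].
have inj x : phi x = phi a0 -> x = a0.
  by move=> e; rewrite -(K1 x I) e K1.
have hs : homeomorphic_subspaces F G.
  exists phi, psi; split; [|split; [|split; [|split; [|split]]]].
  - move=> x Fx; split; first exact: fW.
    by move=> /inj.
  - move=> y [W'y ny] e; apply: ny; by rewrite -e K2.
  - by move=> x _; apply: K1.
  - by move=> y [W'y _]; apply: K2.
  - by apply: continuous_subspaceT; apply: disc_cont.
  - by apply: continuous_subspaceT; apply: disc_cont.
have cl (U : set X) : clopen_set U.
  by split; [exact: disc_open Hs U | rewrite -openC; exact: disc_open Hs _].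
have nF : F <> setT.
  move=> FT; have HF : F a0 by rewrite FT.
  by apply: HF.
have nG : G <> setT.
  move=> GT; have HG : G (phi a0) by rewrite GT.
  by case: HG => _; apply.
have [p [q [fp [fq [Kp [Kq _]]]]]] := D F G (cl F) (cl G) nF nG hs.
have G1 : (~` G) y0 by case.
have G2 : (~` G) (phi a0) by move=> [_]; apply.
have q1 : q y0 = a0 by apply: contrapT => ne; apply: (fq y0 G1).
have q2 : q (phi a0) = a0 by apply: contrapT => ne; apply: (fq _ G2).
apply: ny0.
have e : p (q y0) = p (q (phi a0)) by rewrite q1 q2.
rewrite (Kq y0 G1) (Kq _ G2) in e; rewrite e.
exact: fW.
Qed.

End Helpers.

Theorem mainTheorem5 (X : topologicalType) :
  collectionwise_normal X -> homogeneous X -> ind_eq0 X -> property_D X ->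
  sDH X.
Proof.
move=> cwn hom ind PD; have [hX D] := PD; split => // A B f dA dB [fAB injf _].
have cA := disc_closed hX dA; have cB := disc_closed hX dB.
have [[p [nAp nBp]]|hAB] := pselect (exists p, ~ A p /\ ~ B p).
  have oO : open (~` [set p]).
    by rewrite openC; exact: accessible_closed_set1 (hausdorff_accessible hX) p.
  have AO : A `<=` ~` [set p] by move=> a Aa ap; apply: nAp; rewrite -ap.
  have BO : B `<=` ~` [set p] by move=> a Aa ap; apply: nBp; rewrite -ap.
  have [W [W' [phi [psi [[oW cW] [oW' cW'] [WO W'O] hd phiE]]]]] :=
    construct hX cwn hom ind dA dB fAB injf oO AO BO.
  have nW : W <> setT.
    move=> WT; have Wp : W p by rewrite WT.
    by apply: (WO p Wp).
  have nW' : W' <> setT.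
    move=> WT; have Wp : W' p by rewrite WT.
    by apply: (W'O p Wp).
  have [h [hh hE]] := glue PD oW cW oW' cW' nW nW' hd.
  exists h; split => // a Aa; have [Wa <-] := phiE a Aa; exact: hE.
have Hs : forall x : X, nbhs x [set x].
  move=> x; have [NA [NAx NAu]] := disc_nbhs cA dA x.
  have [NB [NBx NBu]] := disc_nbhs cB dB x.
  apply: filterS (filterI NAx NBx) => y [NAy NBy].
  have [Ay|By] : A y \/ B y.
    by apply: contrapT => nAB; apply: hAB; exists y; split => Hy; apply: nAB; [left|right].
    exact: NAu.
  exact: NBu.
have oT : open [set: X] := openT.
have [W [W' [phi [psi [[oW cW] [oW' cW'] [WO W'O] hd phiE]]]]] :=
  construct hX cwn hom ind dA dB fAB injf oT (fun _ _ => I) (fun _ _ => I).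
have ext : exists h, self_homeo h /\ forall x, W x -> h x = phi x.
  have [WT|nW] := pselect (W = setT); have [W'T|nW'] := pselect (W' = setT).
  - by exists phi; split => //; rewrite WT W'T in hd; exact: full hd.
  - by exfalso; rewrite WT in hd; exact: mixed Hs PD hd nW'.
  - by exfalso; rewrite W'T in hd; exact: mixed Hs PD (hdata_sym hd) nW.
  - exact: glue PD oW cW oW' cW' nW nW' hd.
have [h [hh hE]] := ext.
exists h; split => // a Aa; have [Wa <-] := phiE a Aa; exact: hE.
Qed.
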